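(* For every $\epsilon>0$ there exist a smooth strictly subharmonic function $\phi^\epsilon$ on $\mathbb{C}$ and constants $\delta_1,\delta_2,r>0$ such that: (1) $\phi^\epsilon=(1-\delta_1)\phi-\delta_2$ on the ball $B_r=\{|z|<r\}$; (2) $\phi^\epsilon=\psi$ for $|z|>1$; (3) $\|\phi^\epsilon-\psi\|_{C^2}<\epsilon$.
   Context: Let $\phi$ be a smooth strictly subharmonic ($\Delta\phi>0$) real function on $\mathbb{C}$ with $\phi(z)=|z|^2+o(|z|^2)$ as $z\to0$. Let $\psi$ be a smooth strictly subharmonic real function on $\mathbb{C}$ with the following properties: - $\psi$ is $S^1$-invariant, i.e. $\psi(e^{is}z)=\psi(z)$; - $\psi(z)=|z|^2$ on the unit disc; - $\psi-\log(1+|z|^2)$ extends to a smooth function at $\infty\in\mathbb{P}^1$. The norm $\|\cdot\|_{C^2}$ is the supremum over $\mathbb{C}$ of the absolute values of all partial derivatives of order at most $2$. *)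

(* Defs.v *)
(* concrete reals R, Coquelicot for derivatives/continuity.
   The complex plane C is modelled as R x R, a function on C as f : R -> R -> R. *)
From Stdlib Require Import Reals List.
From Coquelicot Require Import Coquelicot.
Open Scope R_scope.

Definition partial (b : bool) (f : R -> R -> R) : R -> R -> R :=
  if b then fun x y => Derive (fun t => f t y) x
  else fun x y => Derive (fun t => f x t) y.

Fixpoint pd (l : list bool) (f : R -> R -> R) : R -> R -> R :=
  match l with
  | nil => f
  | b :: l' => partial b (pd l' f)
  end.

Definition smooth (f : R -> R -> R) : Prop :=
  forall (l : list bool) (x y : R),
    ex_derive (fun t => pd l f t y) x /\
    ex_derive (fun t => pd l f x t) y /\
    continuous (fun p : R * R => pd l f (fst p) (snd p)) (x, y).

Definition laplacian (f : R -> R -> R) (x y : R) : R :=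
  pd (true :: true :: nil) f x y + pd (false :: false :: nil) f x y.

Definition strictly_subharmonic (f : R -> R -> R) : Prop :=
  smooth f /\ forall x y, 0 < laplacian f x y.

Definition norm2 (x y : R) : R := x ^ 2 + y ^ 2.

Definition C2_norm_lt (f : R -> R -> R) (eps : R) : Prop :=
  exists M, M < eps /\
    forall (l : list bool) (x y : R), (length l <= 2)%nat -> Rabs (pd l f x y) <= M.

Definition S1_invariant (f : R -> R -> R) : Prop :=
  forall s x y, f (x * cos s - y * sin s) (x * sin s + y * cos s) = f x y.

(* f - log(1+|z|^2) extends to a smooth function at infinity in P^1:
   in the chart w = 1/z, w <> 0 ↦ f(1/w) - log(1 + |1/w|^2) extends to a smooth
   function on C *)
Definition extends_smooth_at_infinity (f : R -> R -> R) : Prop :=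
  exists h : R -> R -> R, smooth h /\
    forall u v, norm2 u v <> 0 ->
      h u v = f (u / norm2 u v) (- v / norm2 u v) - ln (1 + / norm2 u v).

(* Main.v *)
Require Import Defs.
From Stdlib Require Import Reals List Lra Lia FunctionalExtensionality.
From Coquelicot Require Import Coquelicot.
Open Scope R_scope.

Definition Q (h : R -> R -> R) : Prop := forall x y,
  ex_derive (fun t => h t y) x /\ ex_derive (fun t => h x t) y /\
  continuous (fun p : R * R => h (fst p) (snd p)) (x, y).
Definition Sn (n : nat) h := forall l, (length l <= n)%nat -> Q (pd l h).

Lemma smooth_Sn f : smooth f <-> forall n, Sn n f.
Proof.
  split.
  - intros H n l _ x y. apply H.
  - intros H l x y. apply (H (length l) l (le_n _)).
Qed.

Lemma pd_app l b f : pd (l ++ b :: nil) f = pd l (partial b f).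
Proof. induction l; simpl; congruence. Qed.

Lemma Sn_Q n f : Sn n f -> Q f.
Proof. intros H; apply (H nil); simpl; lia. Qed.

Lemma Sn_mono n m f : (m <= n)%nat -> Sn n f -> Sn m f.
Proof. intros Hm H l Hl; apply H; lia. Qed.

Lemma Sn_partial n b f : Sn (S n) f -> Sn n (partial b f).
Proof. intros H l Hl. rewrite <- pd_app. apply H. rewrite length_app; simpl; lia. Qed.

Lemma Sn_succ n f : Q f -> (forall b, Sn n (partial b f)) -> Sn (S n) f.
Proof.
  intros HQ H l Hl. destruct l as [|b0 l0] using rev_ind.
  - exact HQ.
  - rewrite pd_app. apply H. rewrite length_app in Hl; simpl in Hl; lia.
Qed.

Lemma Sn0 f : Q f -> Sn 0 f.
Proof. intros H l Hl. destruct l; [exact H| simpl in Hl; lia]. Qed.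

Lemma Q_plus f g : Q f -> Q g -> Q (fun x y => f x y + g x y).
Proof.
  intros Hf Hg x y. destruct (Hf x y) as [a [b c]]. destruct (Hg x y) as [a' [b' c']].
  split; [|split].
  - apply (ex_derive_plus (fun t => f t y) (fun t => g t y)); auto.
  - apply (ex_derive_plus (fun t => f x t) (fun t => g x t)); auto.
  - apply (continuous_plus (fun p : R*R => f (fst p) (snd p)) (fun p : R*R => g (fst p) (snd p))); auto.
Qed.

Lemma Q_mult f g : Q f -> Q g -> Q (fun x y => f x y * g x y).
Proof.
  intros Hf Hg x y. destruct (Hf x y) as [a [b c]]. destruct (Hg x y) as [a' [b' c']].
  split; [|split].
  - apply (ex_derive_mult (fun t => f t y) (fun t => g t y)); auto.
  - apply (ex_derive_mult (fun t => f x t) (fun t => g x t)); auto.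
  - apply (continuous_mult (fun p : R*R => f (fst p) (snd p)) (fun p : R*R => g (fst p) (snd p))); auto.
Qed.

Lemma partial_plus b f g : Q f -> Q g ->
  partial b (fun x y => f x y + g x y) = (fun x y => partial b f x y + partial b g x y).
Proof.
  intros Hf Hg. destruct b; simpl; apply functional_extensionality; intro x;
  apply functional_extensionality; intro y.
  - destruct (Hf x y) as [a _]; destruct (Hg x y) as [a' _].
    exact (Derive_plus (fun t => f t y) (fun t => g t y) x a a').
  - destruct (Hf x y) as [_ [a _]]; destruct (Hg x y) as [_ [a' _]].
    exact (Derive_plus (fun t => f x t) (fun t => g x t) y a a').
Qed.

Lemma partial_mult b f g : Q f -> Q g ->
  partial b (fun x y => f x y * g x y) =
  (fun x y => partial b f x y * g x y + f x y * partial b g x y).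
Proof.
  intros Hf Hg. destruct b; simpl; apply functional_extensionality; intro x;
  apply functional_extensionality; intro y.
  - destruct (Hf x y) as [a _]; destruct (Hg x y) as [a' _].
    exact (Derive_mult (fun t => f t y) (fun t => g t y) x a a').
  - destruct (Hf x y) as [_ [a _]]; destruct (Hg x y) as [_ [a' _]].
    exact (Derive_mult (fun t => f x t) (fun t => g x t) y a a').
Qed.

Lemma Sn_plus n : forall f g, Sn n f -> Sn n g -> Sn n (fun x y => f x y + g x y).
Proof.
  induction n; intros f g Hf Hg.
  - apply Sn0, Q_plus; eapply Sn_Q; eauto.
  - apply Sn_succ.
    + apply Q_plus; eapply Sn_Q; eauto.
    + intro b. rewrite partial_plus by (eapply Sn_Q; eauto).
      apply IHn; apply Sn_partial; auto.
Qed.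

Lemma Sn_mult n : forall f g, Sn n f -> Sn n g -> Sn n (fun x y => f x y * g x y).
Proof.
  induction n; intros f g Hf Hg.
  - apply Sn0, Q_mult; eapply Sn_Q; eauto.
  - apply Sn_succ.
    + apply Q_mult; eapply Sn_Q; eauto.
    + intro b. rewrite partial_mult by (eapply Sn_Q; eauto).
      apply Sn_plus; apply IHn.
      * apply Sn_partial; exact Hf.
      * exact (Sn_mono (S n) n g (le_S _ _ (le_n _)) Hg).
      * exact (Sn_mono (S n) n f (le_S _ _ (le_n _)) Hf).
      * apply Sn_partial; exact Hg.
Qed.

Lemma Q_const c : Q (fun _ _ => c).
Proof.
  intros x y; split; [|split]; try apply ex_derive_const.
  apply continuous_const.
Qed.

Lemma partial_const b c : partial b (fun _ _ => c) = (fun _ _ => 0).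
Proof.
  destruct b; simpl; apply functional_extensionality; intro x;
  apply functional_extensionality; intro y; apply Derive_const.
Qed.

Lemma Sn_const n : forall c, Sn n (fun _ _ => c).
Proof.
  induction n; intro c. apply Sn0, Q_const.
  apply Sn_succ. apply Q_const. intro b; rewrite partial_const; auto.
Qed.

Lemma smooth_const c : smooth (fun _ _ => c).
Proof. apply smooth_Sn; intro; apply Sn_const. Qed.

Lemma Q_X : Q (fun x _ => x).
Proof.
  intros x y; split; [|split]. apply ex_derive_id. apply ex_derive_const.
  apply continuous_fst.
Qed.
Lemma Q_Y : Q (fun _ y => y).
Proof.
  intros x y; split; [|split]. apply ex_derive_const. apply ex_derive_id.
  apply continuous_snd.
Qed.

Lemma Sn_X n : Sn n (fun x _ => x).
Proof.
  destruct n. apply Sn0, Q_X. apply Sn_succ. apply Q_X.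
  intro b. replace (partial b (fun x _ => x)) with (fun _ _ : R => if b then 1 else 0).
  destruct b; apply Sn_const.
  destruct b; simpl; apply functional_extensionality; intro x;
  apply functional_extensionality; intro y. symmetry; apply Derive_id. symmetry; apply Derive_const.
Qed.
Lemma Sn_Y n : Sn n (fun _ y => y).
Proof.
  destruct n. apply Sn0, Q_Y. apply Sn_succ. apply Q_Y.
  intro b. replace (partial b (fun _ y => y)) with (fun _ _ : R => if b then 0 else 1).
  destruct b; apply Sn_const.
  destruct b; simpl; apply functional_extensionality; intro x;
  apply functional_extensionality; intro y. symmetry; apply Derive_const. symmetry; apply Derive_id.
Qed.

Lemma smooth_X : smooth (fun x _ => x).
Proof. apply smooth_Sn; intro; apply Sn_X. Qed.
Lemma smooth_Y : smooth (fun _ y => y).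
Proof. apply smooth_Sn; intro; apply Sn_Y. Qed.
Lemma smooth_plus f g : smooth f -> smooth g -> smooth (fun x y => f x y + g x y).
Proof. rewrite !smooth_Sn; intros; apply Sn_plus; auto. Qed.
Lemma smooth_mult f g : smooth f -> smooth g -> smooth (fun x y => f x y * g x y).
Proof. rewrite !smooth_Sn; intros; apply Sn_mult; auto. Qed.
Lemma smooth_partial b f : smooth f -> smooth (partial b f).
Proof. rewrite !smooth_Sn; intros H n; apply Sn_partial; auto. Qed.
Lemma smooth_Q f : smooth f -> Q f.
Proof. rewrite smooth_Sn; intros H; apply (Sn_Q 0); auto. Qed.


Definition smooth1 (g : R -> R) := smooth (fun x (_ : R) => g x).

Lemma smooth1_ex g : smooth1 g -> forall x, ex_derive g x.
Proof. intros H x. destruct (smooth_Q _ H x 0) as [a _]. exact a. Qed.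

Lemma smooth1_D g : smooth1 g -> smooth1 (Derive g).
Proof. intros H. exact (smooth_partial true _ H). Qed.

Lemma smooth1_cont g : smooth1 g -> forall x, continuous g x.
Proof. intros H x. apply (ex_derive_continuous (K:=R_AbsRing) (V:=R_NormedModule)), smooth1_ex, H. Qed.

Lemma Q_comp g u : smooth1 g -> Q u -> Q (fun x y => g (u x y)).
Proof.
  intros Hg Hu x y. destruct (Hu x y) as [a [b c]]. split; [|split].
  - apply (ex_derive_comp g (fun t => u t y)); auto. apply smooth1_ex; auto.
  - apply (ex_derive_comp g (fun t => u x t)); auto. apply smooth1_ex; auto.
  - apply (continuous_comp (fun p : R*R => u (fst p) (snd p)) g); auto.
    apply smooth1_cont; auto.
Qed.

Lemma partial_comp b g u : smooth1 g -> Q u ->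
  partial b (fun x y => g (u x y)) = (fun x y => Derive g (u x y) * partial b u x y).
Proof.
  intros Hg Hu. destruct b; simpl; apply functional_extensionality; intro x;
  apply functional_extensionality; intro y.
  - destruct (Hu x y) as [a _].
    rewrite (Derive_comp g (fun t => u t y) x (smooth1_ex _ Hg _) a). apply Rmult_comm.
  - destruct (Hu x y) as [_ [a _]].
    rewrite (Derive_comp g (fun t => u x t) y (smooth1_ex _ Hg _) a). apply Rmult_comm.
Qed.

Lemma Sn_comp n : forall g u, smooth1 g -> smooth u -> Sn n (fun x y => g (u x y)).
Proof.
  induction n; intros g u Hg Hu.
  - apply Sn0, Q_comp; auto. apply smooth_Q; auto.
  - apply Sn_succ. apply Q_comp; auto. apply smooth_Q; auto.
    intro b. rewrite partial_comp by (auto; apply smooth_Q; auto).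
    apply Sn_mult. apply IHn; auto. apply smooth1_D; auto.
    apply smooth_Sn. apply smooth_partial; auto.
Qed.

Lemma smooth_comp g u : smooth1 g -> smooth u -> smooth (fun x y => g (u x y)).
Proof. intros; apply smooth_Sn; intro; apply Sn_comp; auto. Qed.

Lemma Q_inv g : Q g -> (forall x y, g x y <> 0) -> Q (fun x y => / g x y).
Proof.
  intros Hg Hn x y. destruct (Hg x y) as [a [b c]]. split; [|split].
  - apply (ex_derive_inv (fun t => g t y)); auto.
  - apply (ex_derive_inv (fun t => g x t)); auto.
  - apply (continuous_comp (fun p : R*R => g (fst p) (snd p)) (fun t => / t)); auto.
    apply continuous_Rinv; apply Hn.
Qed.

Lemma partial_inv b g : Q g -> (forall x y, g x y <> 0) ->
  partial b (fun x y => / g x y) =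
  (fun x y => ((fun _ _ => -1) x y * partial b g x y) * (/ g x y * / g x y)).
Proof.
  intros Hg Hn. destruct b; simpl; apply functional_extensionality; intro x;
  apply functional_extensionality; intro y.
  - destruct (Hg x y) as [a _].
    rewrite (Derive_inv (fun t => g t y) x a (Hn x y)). field. apply Hn.
  - destruct (Hg x y) as [_ [a _]].
    rewrite (Derive_inv (fun t => g x t) y a (Hn x y)). field. apply Hn.
Qed.

Lemma Sn_inv n : forall g, Sn n g -> (forall x y, g x y <> 0) -> Sn n (fun x y => / g x y).
Proof.
  induction n; intros g Hg Hn.
  - apply Sn0, Q_inv; auto. eapply Sn_Q; eauto.
  - apply Sn_succ. apply Q_inv; auto. eapply Sn_Q; eauto.
    intro b. rewrite partial_inv by (auto; eapply Sn_Q; eauto).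
    assert (Hg' : Sn n g) by exact (Sn_mono (S n) n g (le_S _ _ (le_n _)) Hg).
    apply Sn_mult. apply Sn_mult. apply Sn_const. apply Sn_partial; exact Hg.
    apply Sn_mult; apply IHn; auto.
Qed.

Lemma smooth_inv g : smooth g -> (forall x y, g x y <> 0) -> smooth (fun x y => / g x y).
Proof. rewrite !smooth_Sn; intros; apply Sn_inv; auto. Qed.

Lemma pd_plus l : forall f g, smooth f -> smooth g ->
  pd l (fun x y => f x y + g x y) = (fun x y => pd l f x y + pd l g x y).
Proof.
  induction l as [|b l IH]; intros f g Hf Hg. reflexivity.
  simpl. rewrite IH by auto. apply partial_plus.
  - intros x y. apply Hf.
  - intros x y. apply Hg.
Qed.

Lemma smooth_pdQ l f : smooth f -> Q (pd l f).
Proof. intros H x y. apply H. Qed.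


Lemma loc_pos t : 0 < t -> locally t (fun s => 0 < s).
Proof. intros Ht. exists (mkposreal t Ht). intros s Hs. change (Rabs (s - t) < t) in Hs.
apply Rabs_def2 in Hs. lra. Qed.
Lemma loc_neg t : t < 0 -> locally t (fun s => s < 0).
Proof. intros Ht. assert (H : 0 < - t) by lra. exists (mkposreal _ H). intros s Hs.
change (Rabs (s - t) < - t) in Hs. apply Rabs_def2 in Hs. lra. Qed.

Definition ee (j : nat) (t : R) : R := if Rle_dec t 0 then 0 else / t ^ j * exp (- / t).

Lemma ee_nonneg j t : 0 <= ee j t.
Proof.
  unfold ee; destruct (Rle_dec t 0). lra.
  apply Rmult_le_pos. apply Rlt_le, Rinv_0_lt_compat, pow_lt; lra.
  apply Rlt_le, exp_pos.
Qed.

Lemma ee_pos j t : 0 < t -> 0 < ee j t.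
Proof.
  intros Ht; unfold ee; destruct (Rle_dec t 0). lra.
  apply Rmult_lt_0_compat. apply Rinv_0_lt_compat, pow_lt; lra. apply exp_pos.
Qed.

Lemma exp_pow_n n x : exp x ^ n = exp (INR n * x).
Proof.
  induction n. simpl. rewrite Rmult_0_l, exp_0; reflexivity.
  rewrite S_INR, Rmult_plus_distr_r, Rmult_1_l, exp_plus, <- IHn. simpl. ring.
Qed.

Lemma exp_ge_pow n u : 0 <= u -> u ^ (S n) <= INR (S n) ^ (S n) * exp u.
Proof.
  intros Hu. set (m := INR (S n)). assert (Hm : 0 < m) by (apply lt_0_INR; lia).
  replace (exp u) with (exp (u / m) ^ (S n)).
  2:{ rewrite exp_pow_n. f_equal. fold m. field. lra. }
  rewrite <- Rpow_mult_distr.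
  apply pow_incr. split. assumption.
  assert (H1 : u / m < exp (u / m)).
  { pose proof (exp_ineq1 (u/m)). destruct (Req_dec u 0).
    subst. unfold Rdiv; rewrite Rmult_0_l, exp_0; lra.
    assert (0 < u / m) by (apply Rdiv_lt_0_compat; lra). assert (Hne : u / m <> 0) by lra. specialize (H Hne); lra. }
  apply Rle_trans with (m * (u / m)). right; field; lra.
  apply Rmult_le_compat_l; lra.
Qed.

Lemma ee_bound j t : 0 < t -> ee j t <= INR (S j) ^ (S j) * t.
Proof.
  intros Ht. unfold ee; destruct (Rle_dec t 0). lra.
  set (u := / t). assert (Hu : 0 < u) by (apply Rinv_0_lt_compat; lra).
  replace (/ t ^ j) with (u ^ j) by (unfold u; rewrite pow_inv; reflexivity).
  replace (exp (- u)) with (/ exp u) by (rewrite exp_Ropp; reflexivity).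
  pose proof (exp_ge_pow j u (Rlt_le _ _ Hu)) as H.
  pose proof (exp_pos u).
  replace t with (/ u) by (unfold u; field; lra).
  apply Rmult_le_reg_r with (exp u * u). apply Rmult_lt_0_compat; lra.
  replace (u ^ j * / exp u * (exp u * u)) with (u ^ S j) by (simpl; field; lra).
  replace (INR (S j) ^ S j * / u * (exp u * u)) with (INR (S j) ^ S j * exp u) by (field; lra).
  exact H.
Qed.

Lemma ee_deriv j t : is_derive (ee j) t (- INR j * ee (S j) t + ee (S (S j)) t).
Proof.
  destruct (Rtotal_order t 0) as [Ht | [Ht | Ht]].
  - apply is_derive_ext_loc with (fun _ => 0).
    + generalize (loc_neg t Ht). apply filter_imp. intros s Hs. unfold ee.
      destruct (Rle_dec s 0); [reflexivity | lra].
    + unfold ee; destruct (Rle_dec t 0); [|lra].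
      replace (- INR j * 0 + 0) with 0 by ring. apply is_derive_Reals, derivable_pt_lim_const.
  - subst t. unfold ee at 2 3. destruct (Rle_dec 0 0); [|lra].
    replace (- INR j * 0 + 0) with 0 by ring.
    apply is_derive_Reals. intros eps Heps.
    set (K := INR (S (S j)) ^ (S (S j))).
    assert (HK : 0 < K) by (apply pow_lt, lt_0_INR; lia).
    assert (Hd : 0 < eps / K) by (apply Rdiv_lt_0_compat; lra).
    exists (mkposreal _ Hd). intros h Hh Hhd. simpl in Hhd.
    rewrite Rplus_0_l. unfold ee at 2. destruct (Rle_dec 0 0); [|lra].
    unfold ee. destruct (Rle_dec h 0).
    + replace ((0 - 0) / h - 0) with 0 by (field; lra). rewrite Rabs_R0. lra.
    + assert (Hh0 : 0 < h) by lra.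
      pose proof (ee_bound (S j) h Hh0) as Hb. unfold ee in Hb.
      destruct (Rle_dec h 0); [lra|].
      replace ((/ h ^ j * exp (- / h) - 0) / h - 0) with (/ h ^ S j * exp (- / h)).
      2:{ simpl. field. split; [apply pow_nonzero|]; lra. }
      rewrite Rabs_pos_eq.
      2:{ apply Rmult_le_pos. apply Rlt_le, Rinv_0_lt_compat, pow_lt; lra. apply Rlt_le, exp_pos. }
      apply Rle_lt_trans with (K * h). exact Hb.
      rewrite Rabs_pos_eq in Hhd by lra.
      apply Rmult_lt_reg_r with (/ K). apply Rinv_0_lt_compat; lra.
      replace (K * h * / K) with h by (field; lra). exact Hhd.
  - apply is_derive_ext_loc with (fun s => / s ^ j * exp (- / s)).
    + generalize (loc_pos t Ht). apply filter_imp. intros s Hs. unfold ee.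
      destruct (Rle_dec s 0); [lra | reflexivity].
    + unfold ee; destruct (Rle_dec t 0); [lra|].
      assert (Hj: t ^ j <> 0) by (apply pow_nonzero; lra). auto_derive.
      split; auto; split; auto; lra.
      destruct j. simpl. field. lra.
      rewrite S_INR. simpl (Init.Nat.pred _). simpl (t ^ S _) in *. field.
      split; [apply pow_nonzero; lra | lra].
Qed.

Inductive good : (R -> R) -> Prop :=
| good_e j : good (ee j)
| good_plus f g : good f -> good g -> good (fun t => f t + g t)
| good_scal c f : good f -> good (fun t => c * f t).

Lemma good_prop g : good g -> (forall x, ex_derive g x) /\ good (Derive g).
Proof.
  induction 1 as [j | f g Hf [Hf1 Hf2] Hg [Hg1 Hg2] | c f Hf [Hf1 Hf2]].
  - split. intro x; eexists; apply ee_deriv.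
    replace (Derive (ee j)) with (fun t => (- INR j) * ee (S j) t + ee (S (S j)) t).
    apply good_plus; [apply good_scal|]; apply good_e.
    apply functional_extensionality; intro t. symmetry; apply is_derive_unique, ee_deriv.
  - split. intro x. apply (ex_derive_plus f g); auto.
    replace (Derive (fun t => f t + g t)) with (fun t => Derive f t + Derive g t).
    apply good_plus; auto.
    apply functional_extensionality; intro t. symmetry.
    exact (Derive_plus f g t (Hf1 t) (Hg1 t)).
  - split. intro x. apply ex_derive_scal; auto.
    replace (Derive (fun t => c * f t)) with (fun t => c * Derive f t).
    apply good_scal; auto.
    apply functional_extensionality; intro t. symmetry. apply Derive_scal.
Qed.

Lemma lift_Q g : (forall x, ex_derive g x) -> Q (fun x (_ : R) => g x).
Proof.
  intros Hg x y. split; [|split].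
  + apply Hg.
  + exact (ex_derive_const (K:=R_AbsRing) (V:=R_NormedModule) (g x) y).
  + apply (continuous_comp (fun p : R * R => fst p) g). apply continuous_fst.
    apply (ex_derive_continuous (K:=R_AbsRing) (V:=R_NormedModule)). apply Hg.
Qed.

Lemma lift_Sn (P : (R -> R) -> Prop) :
  (forall g, P g -> (forall x, ex_derive g x) /\ P (Derive g)) ->
  forall n g, P g -> Sn n (fun x (_ : R) => g x).
Proof.
  intros HP n. induction n; intros g Hg.
  - apply Sn0. apply lift_Q. exact (proj1 (HP g Hg)).
  - apply Sn_succ.
    + apply lift_Q. exact (proj1 (HP g Hg)).
    + intros [|].
      * exact (IHn (Derive g) (proj2 (HP g Hg))).
      * replace (partial false (fun x (_ : R) => g x)) with (fun _ _ : R => 0).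
        apply Sn_const. simpl. apply functional_extensionality; intro x;
        apply functional_extensionality; intro y. symmetry; apply Derive_const.
Qed.

Lemma smooth1_ee : smooth1 (ee 0).
Proof.
  unfold smooth1. apply smooth_Sn. intro n. apply (lift_Sn good). apply good_prop. apply good_e.
Qed.


Definition chi (s : R) : R := ee 0 (2 + (-1) * s) * / (ee 0 (2 + (-1) * s) + ee 0 (s + (-1))).

Lemma chi_den_pos s : 0 < ee 0 (2 + (-1) * s) + ee 0 (s + (-1)).
Proof.
  pose proof (ee_nonneg 0 (2 + (-1) * s)). pose proof (ee_nonneg 0 (s + (-1))).
  destruct (Rlt_dec s 2).
  - pose proof (ee_pos 0 (2 + (-1) * s)). assert (0 < 2 + (-1) * s) by lra. specialize (H1 H2). lra.
  - pose proof (ee_pos 0 (s + (-1))). assert (0 < s + (-1)) by lra. specialize (H1 H2). lra.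
Qed.

Lemma smooth_lin a c : smooth (fun x (_ : R) => a + c * x).
Proof.
  apply (smooth_plus (fun _ _ => a) (fun x _ => c * x)). apply smooth_const.
  apply (smooth_mult (fun _ _ => c) (fun x _ => x)). apply smooth_const. apply smooth_X.
Qed.

Lemma smooth1_chi : smooth1 chi.
Proof.
  unfold smooth1, chi.
  apply (smooth_mult (fun x _ => ee 0 (2 + (-1) * x)) (fun x _ => / (ee 0 (2 + (-1) * x) + ee 0 (x + (-1))))).
  - exact (smooth_comp (ee 0) (fun x _ => 2 + (-1) * x) smooth1_ee (smooth_lin 2 (-1))).
  - apply (smooth_inv (fun x _ => ee 0 (2 + (-1) * x) + ee 0 (x + (-1)))).
    + apply (smooth_plus (fun x _ => ee 0 (2 + (-1) * x)) (fun x _ => ee 0 (x + (-1)))).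
      exact (smooth_comp (ee 0) (fun x _ => 2 + (-1) * x) smooth1_ee (smooth_lin 2 (-1))).
      apply (smooth_comp (ee 0) (fun x _ => x + (-1)) smooth1_ee).
      apply (smooth_plus (fun x _ => x) (fun _ _ => -1)). apply smooth_X. apply smooth_const.
    + intros x y. pose proof (chi_den_pos x). lra.
Qed.

Lemma chi_one s : s <= 1 -> chi s = 1.
Proof.
  intros Hs. unfold chi. assert (H : ee 0 (s + (-1)) = 0).
  { unfold ee. destruct (Rle_dec (s + (-1)) 0); [reflexivity | lra]. }
  rewrite H, Rplus_0_r. apply Rinv_r. pose proof (ee_pos 0 (2 + (-1) * s)). 
  assert (0 < 2 + (-1) * s) by lra. specialize (H0 H1). lra.
Qed.

Lemma chi_zero s : 2 <= s -> chi s = 0.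
Proof.
  intros Hs. unfold chi. assert (H : ee 0 (2 + (-1) * s) = 0).
  { unfold ee. destruct (Rle_dec (2 + (-1) * s) 0); [reflexivity | lra]. }
  rewrite H. ring.
Qed.

Lemma chi_range s : 0 <= chi s <= 1.
Proof.
  unfold chi. pose proof (chi_den_pos s). pose proof (ee_nonneg 0 (2 + (-1) * s)).
  pose proof (ee_nonneg 0 (s + (-1))). split.
  - apply Rmult_le_pos. lra. apply Rlt_le, Rinv_0_lt_compat; lra.
  - apply Rmult_le_reg_r with (ee 0 (2 + (-1) * s) + ee 0 (s + (-1))). lra.
    rewrite Rmult_assoc, Rinv_l by lra. lra.
Qed.

Lemma loc_gt a t : a < t -> locally t (fun s => a < s).
Proof. intros Ht. assert (H : 0 < t - a) by lra. exists (mkposreal _ H). intros s Hs.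
change (Rabs (s - t) < t - a) in Hs. apply Rabs_def2 in Hs. lra. Qed.

Lemma Dchi_zero s : 2 < s -> Derive chi s = 0.
Proof.
  intros Hs. rewrite (Derive_ext_loc chi (fun _ => 0)). apply Derive_const.
  generalize (loc_gt 2 s Hs). apply filter_imp. intros t Ht. apply chi_zero; lra.
Qed.

Lemma DDchi_zero s : 2 < s -> Derive (Derive chi) s = 0.
Proof.
  intros Hs. rewrite (Derive_ext_loc (Derive chi) (fun _ => 0)). apply Derive_const.
  generalize (loc_gt 2 s Hs). apply filter_imp. intros t Ht. apply Dchi_zero; lra.
Qed.

Lemma bound_on (f : R -> R) : (forall x, continuous f x) ->
  exists A, 0 <= A /\ forall s, 0 <= s <= 2 -> Rabs (f s) <= A.
Proof.
  intros Hc. destruct (bounded_continuity (K:=R_AbsRing) (V:=R_NormedModule) f 0 2) as [M HM].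
  intros x _; apply Hc.
  exists (Rabs M). split. apply Rabs_pos. intros s Hs. specialize (HM s Hs).
  change (Rabs (f s) < M) in HM. pose proof (Rle_abs M). lra.
Qed.

Lemma chi_bounds : exists A1 A2, 0 <= A1 /\ 0 <= A2 /\
  forall s, 0 <= s -> Rabs (Derive chi s) <= A1 /\ Rabs (Derive (Derive chi) s) <= A2.
Proof.
  destruct (bound_on (Derive chi)) as [A1 [HA1 H1]].
  { apply smooth1_cont, smooth1_D, smooth1_chi. }
  destruct (bound_on (Derive (Derive chi))) as [A2 [HA2 H2]].
  { apply smooth1_cont, smooth1_D, smooth1_D, smooth1_chi. }
  exists A1, A2. split; auto. split; auto. intros s Hs.
  destruct (Rle_dec s 2).
  - split; [apply H1 | apply H2]; lra.
  - rewrite Dchi_zero, DDchi_zero by lra. rewrite Rabs_R0. lra.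
Qed.


Lemma is_der_x f l x y : smooth f -> is_derive (fun t => pd l f t y) x (pd (true :: l) f x y).
Proof. intros Hf. exact (Derive_correct _ _ (proj1 (Hf l x y))). Qed.
Lemma is_der_y f l x y : smooth f -> is_derive (fun t => pd l f x t) y (pd (false :: l) f x y).
Proof. intros Hf. exact (Derive_correct _ _ (proj1 (proj2 (Hf l x y)))). Qed.

Lemma cont2 (f : R -> R -> R) x0 y0 : continuous (fun p : R * R => f (fst p) (snd p)) (x0, y0) ->
  forall eps, 0 < eps -> exists d, 0 < d /\ forall x y, Rabs (x - x0) < d -> Rabs (y - y0) < d ->
   Rabs (f x y - f x0 y0) < eps.
Proof.
  intros Hc eps Heps. destruct (proj1 (filterlim_locally _ _) Hc (mkposreal eps Heps)) as [d Hd].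
  exists d; split; [apply cond_pos|]. intros x y Hx Hy.
  exact (Hd (x, y) (conj Hx Hy)).
Qed.

Lemma mvt_bound f df b K : (forall t, Rabs t <= Rabs b -> is_derive f t (df t)) ->
  (forall t, Rabs t <= Rabs b -> Rabs (df t) <= K) -> Rabs (f b - f 0) <= K * Rabs b.
Proof.
  intros Hd Hb. destruct (MVT_cor4 f df 0 (Rabs b)) with (b := b) as [c [Hc1 Hc2]].
  - intros c Hc. apply Hd. rewrite Rminus_0_r in Hc; exact Hc.
  - rewrite Rminus_0_r; lra.
  - rewrite Hc1, Rminus_0_r, Rabs_mult. rewrite !Rminus_0_r in Hc2.
    apply Rmult_le_compat_r. apply Rabs_pos. apply Hb; exact Hc2.
Qed.

Lemma zero_of_approach (f : R -> R -> R) : continuous (fun p : R * R => f (fst p) (snd p)) (0, 0) ->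
  (forall e d, 0 < e -> 0 < d -> exists x y, Rabs x < d /\ Rabs y < d /\ Rabs (f x y) <= e) ->
  f 0 0 = 0.
Proof.
  intros Hc Ha. destruct (Req_dec (f 0 0) 0) as [H|H]; auto. exfalso.
  assert (Hp : 0 < Rabs (f 0 0) / 2) by (pose proof (Rabs_pos_lt _ H); lra).
  destruct (cont2 f 0 0 Hc _ Hp) as [d [Hd Hd']].
  destruct (Ha _ d Hp Hd) as [x [y [Hx [Hy Hf]]]].
  rewrite <- (Rminus_0_r x) in Hx. rewrite <- (Rminus_0_r y) in Hy.
  specialize (Hd' x y Hx Hy).
  pose proof (Rabs_triang_inv (f 0 0) (f x y)). rewrite <- Rabs_Ropp in Hd'.
  replace (- (f x y - f 0 0)) with (f 0 0 - f x y) in Hd' by ring. lra.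
Qed.

Section Taylor.
Variable q : R -> R -> R.
Hypothesis Hsm : smooth q.
Hypothesis Hq : forall e, 0 < e -> exists d, 0 < d /\ forall x y, norm2 x y < d ->
      Rabs (q x y) <= e * norm2 x y.

Lemma q00 : q 0 0 = 0.
Proof.
  destruct (Hq 1) as [d [Hd H]]. lra. specialize (H 0 0).
  unfold norm2 in H. replace (0 ^ 2 + 0 ^ 2) with 0 in H by ring.
  specialize (H Hd). rewrite Rmult_0_r in H. pose proof (Rabs_pos (q 0 0)).
  assert (Rabs (q 0 0) = 0) by lra. apply Rabs_eq_0 in H1. exact H1.
Qed.

Lemma small_h e d : 0 < e -> 0 < d -> exists h, 0 < h /\ h < d /\ h <= 1 /\
   forall x y, Rabs x <= h -> Rabs y <= h -> Rabs (q x y) <= e * norm2 x y.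
Proof.
  intros He Hd. destruct (Hq e He) as [d1 [Hd1 H1]].
  exists (Rmin (d / 2) (Rmin 1 (d1 / 4))).
  assert (A1 := Rmin_l (d/2) (Rmin 1 (d1/4))). assert (A2 := Rmin_r (d/2) (Rmin 1 (d1/4))).
  assert (A3 := Rmin_l 1 (d1/4)). assert (A4 := Rmin_r 1 (d1/4)).
  assert (A0 : 0 < Rmin (d / 2) (Rmin 1 (d1 / 4))).
  { apply Rmin_pos. lra. apply Rmin_pos; lra. }
  split; [lra|]. split; [lra|]. split; [lra|].
  intros x y Hx Hy. apply H1. unfold norm2.
  set (h := Rmin (d / 2) (Rmin 1 (d1 / 4))) in *.
  assert (x ^ 2 <= h ^ 2). { rewrite <- (pow2_abs x). apply pow_incr. split; [apply Rabs_pos|lra]. }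
  assert (y ^ 2 <= h ^ 2). { rewrite <- (pow2_abs y). apply pow_incr. split; [apply Rabs_pos|lra]. }
  assert (h ^ 2 <= h) by (simpl; nra). lra.
Qed.

Lemma qx00 : pd (true :: nil) q 0 0 = 0.
Proof.
  apply (zero_of_approach (pd (true :: nil) q)). apply Hsm.
  intros e d He Hd. destruct (small_h e d He Hd) as [h [H0 [H1 [H2 H3]]]].
  destruct (MVT_cor4 (fun t => q t 0) (fun t => pd (true :: nil) q t 0) 0 h) with (b := h)
    as [c [Hc1 Hc2]].
  - intros c _. apply (is_der_x q nil c 0 Hsm).
  - rewrite Rminus_0_r, Rabs_pos_eq; lra.
  - exists c, 0. rewrite Rminus_0_r in Hc2. rewrite Rminus_0_r, (Rabs_pos_eq h) in Hc2 by lra.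
    split; [lra|]. split; [rewrite Rabs_R0; lra|].
    rewrite q00, Rminus_0_r, Rminus_0_r in Hc1.
    assert (Hb : Rabs (q h 0) <= e * norm2 h 0) by (apply H3; rewrite ?Rabs_R0, ?Rabs_pos_eq; lra).
    rewrite Hc1 in Hb. unfold norm2 in Hb. rewrite Rabs_mult, (Rabs_pos_eq h) in Hb by lra.
        apply Rmult_le_reg_r with h. lra. replace (h ^ 2 + 0 ^ 2) with (h * h) in Hb by ring. assert (e * (h * h) <= e * h) by (apply Rmult_le_compat_l; nra). lra.
Qed.

Lemma qy00 : pd (false :: nil) q 0 0 = 0.
Proof.
  apply (zero_of_approach (pd (false :: nil) q)). apply Hsm.
  intros e d He Hd. destruct (small_h e d He Hd) as [h [H0 [H1 [H2 H3]]]].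
  destruct (MVT_cor4 (fun t => q 0 t) (fun t => pd (false :: nil) q 0 t) 0 h) with (b := h)
    as [c [Hc1 Hc2]].
  - intros c _. apply (is_der_y q nil 0 c Hsm).
  - rewrite Rminus_0_r, Rabs_pos_eq; lra.
  - exists 0, c. rewrite Rminus_0_r in Hc2. rewrite Rminus_0_r, (Rabs_pos_eq h) in Hc2 by lra.
    split; [rewrite Rabs_R0; lra|]. split; [lra|].
    rewrite q00, Rminus_0_r, Rminus_0_r in Hc1.
    assert (Hb : Rabs (q 0 h) <= e * norm2 0 h) by (apply H3; rewrite ?Rabs_R0, ?Rabs_pos_eq; lra).
    rewrite Hc1 in Hb. unfold norm2 in Hb. rewrite Rabs_mult, (Rabs_pos_eq h) in Hb by lra.
    apply Rmult_le_reg_r with h. lra. replace (0 ^ 2 + h ^ 2) with (h * h) in Hb by ring. assert (e * (h * h) <= e * h) by (apply Rmult_le_compat_l; nra). lra.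
Qed.

Lemma qxx00 : pd (true :: true :: nil) q 0 0 = 0.
Proof.
  apply (zero_of_approach (pd (true :: true :: nil) q)). apply Hsm.
  intros e d He Hd. assert (He2 : 0 < e / 2) by lra.
  destruct (small_h (e/2) d He2 Hd) as [h [H0 [H1 [H2 H3]]]].
  destruct (Taylor_Lagrange (fun t => q t 0) 1 0 h H0) as [z [Hz Hf]].
  { intros t _ k Hk. destruct k as [|[|[|k]]]; simpl; [trivial | exact (proj1 (Hsm nil t 0)) |
      exact (proj1 (Hsm (true :: nil) t 0)) | lia]. }
  exists z, 0. split. rewrite Rabs_pos_eq; lra. split. rewrite Rabs_R0; lra.
  change (Derive_n (fun t => q t 0) 2 z) with (pd (true :: true :: nil) q z 0) in Hf.
  simpl sum_f_R0 in Hf.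
  change (Derive (fun x => q x 0) 0) with (pd (true :: nil) q 0 0) in Hf.
  rewrite qx00, q00 in Hf.
  replace (INR (Factorial.fact 2)) with 2 in Hf by (simpl; ring).
  assert (Hf2 : q h 0 = (h * h / 2) * pd (true :: true :: nil) q z 0) by (rewrite Hf; field).
  assert (Hb : Rabs (q h 0) <= e / 2 * norm2 h 0) by (apply H3; rewrite ?Rabs_R0, ?Rabs_pos_eq; lra).
  rewrite Hf2 in Hb. unfold norm2 in Hb.
  replace (h ^ 2 + 0 ^ 2) with (h * h) in Hb by ring.
  rewrite Rabs_mult, (Rabs_pos_eq (h * h / 2)) in Hb by nra.
  assert (0 < h * h) by nra.
  apply Rmult_le_reg_l with (h * h / 2). nra. lra.
Qed.

Lemma qyy00 : pd (false :: false :: nil) q 0 0 = 0.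
Proof.
  apply (zero_of_approach (pd (false :: false :: nil) q)). apply Hsm.
  intros e d He Hd. assert (He2 : 0 < e / 2) by lra.
  destruct (small_h (e/2) d He2 Hd) as [h [H0 [H1 [H2 H3]]]].
  destruct (Taylor_Lagrange (fun t => q 0 t) 1 0 h H0) as [z [Hz Hf]].
  { intros t _ k Hk. destruct k as [|[|[|k]]]; simpl; [trivial | exact (proj1 (proj2 (Hsm nil 0 t))) |
      exact (proj1 (proj2 (Hsm (false :: nil) 0 t))) | lia]. }
  exists 0, z. split. rewrite Rabs_R0; lra. split. rewrite Rabs_pos_eq; lra.
  change (Derive_n (fun t => q 0 t) 2 z) with (pd (false :: false :: nil) q 0 z) in Hf.
  simpl sum_f_R0 in Hf.
  change (Derive (fun x => q 0 x) 0) with (pd (false :: nil) q 0 0) in Hf.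
  rewrite qy00, q00 in Hf.
  replace (INR (Factorial.fact 2)) with 2 in Hf by (simpl; ring).
  assert (Hf2 : q 0 h = (h * h / 2) * pd (false :: false :: nil) q 0 z) by (rewrite Hf; field).
  assert (Hb : Rabs (q 0 h) <= e / 2 * norm2 0 h) by (apply H3; rewrite ?Rabs_R0, ?Rabs_pos_eq; lra).
  rewrite Hf2 in Hb. unfold norm2 in Hb.
  replace (0 ^ 2 + h ^ 2) with (h * h) in Hb by ring.
  rewrite Rabs_mult, (Rabs_pos_eq (h * h / 2)) in Hb by nra.
  assert (0 < h * h) by nra.
  apply Rmult_le_reg_l with (h * h / 2). nra. lra.
Qed.

Lemma mixed_aux e d : 0 < e -> 0 < d -> exists h, 0 < h /\ h < d /\ h < 1 /\
   Rabs (q h h - q h 0 - q 0 h + q 0 0) <= e * (h * h).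
Proof.
  intros He Hd. assert (He4 : 0 < e / 4) by lra.
  destruct (small_h (e/4) (Rmin d 1) He4 (Rmin_pos _ _ Hd Rlt_0_1)) as [h [H0 [H1 [H2 H3]]]].
  pose proof (Rmin_l d 1). pose proof (Rmin_r d 1).
  exists h. split; [lra|]. split; [lra|]. split; [lra|].
  assert (B1 : Rabs (q h h) <= e / 4 * norm2 h h) by (apply H3; rewrite Rabs_pos_eq; lra).
  assert (B2 : Rabs (q h 0) <= e / 4 * norm2 h 0) by (apply H3; rewrite ?Rabs_R0, ?Rabs_pos_eq; lra).
  assert (B3 : Rabs (q 0 h) <= e / 4 * norm2 0 h) by (apply H3; rewrite ?Rabs_R0, ?Rabs_pos_eq; lra).
  rewrite q00. unfold norm2 in *.
  replace (h ^ 2 + h ^ 2) with (2 * (h * h)) in B1 by ring.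
  replace (h ^ 2 + 0 ^ 2) with (h * h) in B2 by ring.
  replace (0 ^ 2 + h ^ 2) with (h * h) in B3 by ring.
  replace (q h h - q h 0 - q 0 h + 0) with (q h h + (- q h 0) + (- q 0 h)) by ring.
  eapply Rle_trans. apply Rabs_triang. eapply Rle_trans. apply Rplus_le_compat_r. apply Rabs_triang.
  rewrite !Rabs_Ropp. lra.
Qed.

Lemma qyx00 : pd (false :: true :: nil) q 0 0 = 0.
Proof.
  apply (zero_of_approach (pd (false :: true :: nil) q)). apply Hsm.
  intros e d He Hd. destruct (mixed_aux e d He Hd) as [h [H0 [H1 [H2 H3]]]].
  assert (Hs := Schwarz_aux q 0 0 (mkposreal 1 Rlt_0_1)).
  destruct Hs with (h := h) (k := h) as [u [v [Hu [Hv He']]]].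
  { intros u v _ _. split. exact (proj1 (Hsm nil u v)). exact (proj1 (proj2 (Hsm (true :: nil) u v))). }
  simpl; rewrite Rabs_pos_eq; lra. simpl; rewrite Rabs_pos_eq; lra.
  rewrite !Rplus_0_l, !Rminus_0_r in *. rewrite (Rabs_pos_eq h) in Hu, Hv by lra.
  exists u, v. split; [lra|]. split; [lra|].
  change (Derive (fun z => Derive (fun t => q t z) u) v) with (pd (false :: true :: nil) q u v) in He'.
  replace (q h h - q h 0 - q 0 h + q 0 0) with (q h h - q h 0 - (q 0 h - q 0 0)) in H3 by ring.
  rewrite He', Rabs_mult, (Rabs_pos_eq (h * h)) in H3 by nra.
  apply Rmult_le_reg_l with (h * h). nra. lra.
Qed.

Lemma qxy00 : pd (true :: false :: nil) q 0 0 = 0.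
Proof.
  apply (zero_of_approach (pd (true :: false :: nil) q)). apply Hsm.
  intros e d He Hd. destruct (mixed_aux e d He Hd) as [h [H0 [H1 [H2 H3]]]].
  assert (Hs := Schwarz_aux (fun a b => q b a) 0 0 (mkposreal 1 Rlt_0_1)).
  destruct Hs with (h := h) (k := h) as [u [v [Hu [Hv He']]]].
  { intros u v _ _. split. exact (proj1 (proj2 (Hsm nil v u))). exact (proj1 (Hsm (false :: nil) v u)). }
  simpl; rewrite Rabs_pos_eq; lra. simpl; rewrite Rabs_pos_eq; lra.
  rewrite !Rplus_0_l, !Rminus_0_r in *. rewrite (Rabs_pos_eq h) in Hu, Hv by lra.
  exists v, u. split; [lra|]. split; [lra|].
  change (Derive (fun z => Derive (fun t => q z t) u) v) with (pd (true :: false :: nil) q v u) in He'.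
  replace (q h h - q h 0 - q 0 h + q 0 0) with (q h h - q 0 h - (q h 0 - q 0 0)) in H3 by ring.
  rewrite He', Rabs_mult, (Rabs_pos_eq (h * h)) in H3 by nra.
  apply Rmult_le_reg_l with (h * h). nra. lra.
Qed.

Lemma sec_small b1 b2 : pd (b2 :: b1 :: nil) q 0 0 = 0.
Proof. destruct b1, b2. apply qxx00. apply qyx00. apply qxy00. apply qyy00. Qed.

Lemma sec_cont b1 b2 t : 0 < t -> exists d, 0 < d /\ forall x y, Rabs x < d -> Rabs y < d ->
  Rabs (pd (b2 :: b1 :: nil) q x y) <= t.
Proof.
  intros Ht. destruct (cont2 (pd (b2 :: b1 :: nil) q) 0 0 (proj2 (proj2 (Hsm _ 0 0))) t Ht) as [d [Hd H]].
  exists d. split; auto. intros x y Hx Hy. rewrite <- (Rminus_0_r x) in Hx. rewrite <- (Rminus_0_r y) in Hy.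
  specialize (H x y Hx Hy). rewrite sec_small, Rminus_0_r in H. lra.
Qed.

Lemma q_bounds t : 0 < t -> exists d, 0 < d /\ d <= 1 /\ forall x y, Rabs x < d -> Rabs y < d ->
  (forall b1 b2, Rabs (pd (b2 :: b1 :: nil) q x y) <= t) /\
  (forall b, Rabs (pd (b :: nil) q x y) <= t * (Rabs x + Rabs y)) /\
  Rabs (q x y) <= t * norm2 x y.
Proof.
  intros Ht.
  destruct (sec_cont true true t Ht) as [d1 [Hd1 K1]].
  destruct (sec_cont true false t Ht) as [d2 [Hd2 K2]].
  destruct (sec_cont false true t Ht) as [d3 [Hd3 K3]].
  destruct (sec_cont false false t Ht) as [d4 [Hd4 K4]].
  destruct (Hq t Ht) as [d0 [Hd0 K0]].
  set (d := Rmin (Rmin (Rmin d1 d2) (Rmin d3 d4)) (Rmin 1 (d0 / 4))).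
  assert (E1 : d <= d1 /\ d <= d2 /\ d <= d3 /\ d <= d4 /\ d <= 1 /\ d <= d0 / 4).
  { unfold d. pose proof (Rmin_l (Rmin (Rmin d1 d2) (Rmin d3 d4)) (Rmin 1 (d0 / 4))).
    pose proof (Rmin_r (Rmin (Rmin d1 d2) (Rmin d3 d4)) (Rmin 1 (d0 / 4))).
    pose proof (Rmin_l (Rmin d1 d2) (Rmin d3 d4)). pose proof (Rmin_r (Rmin d1 d2) (Rmin d3 d4)).
    pose proof (Rmin_l d1 d2). pose proof (Rmin_r d1 d2). pose proof (Rmin_l d3 d4). pose proof (Rmin_r d3 d4).
    pose proof (Rmin_l 1 (d0 / 4)). pose proof (Rmin_r 1 (d0 / 4)). repeat split; lra. }
  assert (E0 : 0 < d).
  { unfold d. repeat apply Rmin_pos; lra. }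
  assert (S2 : forall x y, Rabs x < d -> Rabs y < d -> forall b1 b2, Rabs (pd (b2 :: b1 :: nil) q x y) <= t).
  { intros x y Hx Hy [|] [|]; [apply K1|apply K2|apply K3|apply K4]; lra. }
  exists d. split; auto. split. lra. intros x y Hx Hy. split. apply S2; auto. split.
  - intros [|].
    + assert (A1 : Rabs (pd (true :: nil) q x 0 - pd (true :: nil) q 0 0) <= t * Rabs x).
      { apply (mvt_bound (fun s => pd (true :: nil) q s 0) (fun s => pd (true :: true :: nil) q s 0)).
        intros s _. apply (is_der_x q (true :: nil) s 0 Hsm).
        intros s Hs. apply S2. lra. rewrite Rabs_R0; lra. }
      assert (A2 : Rabs (pd (true :: nil) q x y - pd (true :: nil) q x 0) <= t * Rabs y).
      { apply (mvt_bound (fun s => pd (true :: nil) q x s) (fun s => pd (false :: true :: nil) q x s)).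
        intros s _. apply (is_der_y q (true :: nil) x s Hsm).
        intros s Hs. apply S2; lra. }
      rewrite qx00, Rminus_0_r in A1.
      replace (pd (true :: nil) q x y) with ((pd (true :: nil) q x y - pd (true :: nil) q x 0) + pd (true :: nil) q x 0) by ring.
      eapply Rle_trans. apply Rabs_triang. lra.
    + assert (A1 : Rabs (pd (false :: nil) q 0 y - pd (false :: nil) q 0 0) <= t * Rabs y).
      { apply (mvt_bound (fun s => pd (false :: nil) q 0 s) (fun s => pd (false :: false :: nil) q 0 s)).
        intros s _. apply (is_der_y q (false :: nil) 0 s Hsm).
        intros s Hs. apply S2. rewrite Rabs_R0; lra. lra. }
      assert (A2 : Rabs (pd (false :: nil) q x y - pd (false :: nil) q 0 y) <= t * Rabs x).
      { apply (mvt_bound (fun s => pd (false :: nil) q s y) (fun s => pd (true :: false :: nil) q s y)).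
        intros s _. apply (is_der_x q (false :: nil) s y Hsm).
        intros s Hs. apply S2; lra. }
      rewrite qy00, Rminus_0_r in A1.
      replace (pd (false :: nil) q x y) with ((pd (false :: nil) q x y - pd (false :: nil) q 0 y) + pd (false :: nil) q 0 y) by ring.
      eapply Rle_trans. apply Rabs_triang. lra.
  - apply K0. unfold norm2.
    assert (x ^ 2 <= d ^ 2). { rewrite <- (pow2_abs x). apply pow_incr. split; [apply Rabs_pos|lra]. }
    assert (y ^ 2 <= d ^ 2). { rewrite <- (pow2_abs y). apply pow_incr. split; [apply Rabs_pos|lra]. }
    assert (d ^ 2 <= d) by (destruct E1 as [_ [_ [_ [_ [E5 _]]]]]; simpl; rewrite Rmult_1_r; pattern d at 3; rewrite <- Rmult_1_r; apply Rmult_le_compat_l; lra). lra.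
Qed.
End Taylor.


Lemma pd_scal l : forall a f, pd l (fun x y => a * f x y) = (fun x y => a * pd l f x y).
Proof.
  induction l as [|b l IH]; intros a f. reflexivity.
  simpl. rewrite IH. destruct b; simpl; apply functional_extensionality; intro x;
  apply functional_extensionality; intro y; apply Derive_scal.
Qed.

Lemma pd_const_cons b l c : pd (b :: l) (fun _ _ => c) = (fun _ _ => 0).
Proof.
  revert b. induction l as [|b' l IH]; intro b. simpl. apply partial_const.
  change (partial b (pd (b' :: l) (fun _ _ => c)) = (fun _ _ => 0)). rewrite IH. apply partial_const.
Qed.

Lemma pd1_mult b f g : smooth f -> smooth g -> forall x y,
  pd (b :: nil) (fun x y => f x y * g x y) x y = pd (b :: nil) f x y * g x y + f x y * pd (b :: nil) g x y.
Proof.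
  intros Hf Hg x y. simpl. rewrite (partial_mult b f g (smooth_Q _ Hf) (smooth_Q _ Hg)). reflexivity.
Qed.

Lemma pd2_mult b1 b2 f g : smooth f -> smooth g -> forall x y,
  pd (b2 :: b1 :: nil) (fun x y => f x y * g x y) x y =
  pd (b2 :: b1 :: nil) f x y * g x y + pd (b1 :: nil) f x y * pd (b2 :: nil) g x y +
  pd (b2 :: nil) f x y * pd (b1 :: nil) g x y + f x y * pd (b2 :: b1 :: nil) g x y.
Proof.
  intros Hf Hg x y. simpl. rewrite (partial_mult b1 f g (smooth_Q _ Hf) (smooth_Q _ Hg)).
  rewrite (partial_plus b2 (fun x y => partial b1 f x y * g x y) (fun x y => f x y * partial b1 g x y)).
  2: apply Q_mult; [apply (smooth_Q _ (smooth_partial b1 f Hf)) | apply smooth_Q; auto].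
  2: apply Q_mult; [apply smooth_Q; auto | apply (smooth_Q _ (smooth_partial b1 g Hg))].
  rewrite (partial_mult b2 (partial b1 f) g (smooth_Q _ (smooth_partial b1 f Hf)) (smooth_Q _ Hg)).
  rewrite (partial_mult b2 f (partial b1 g) (smooth_Q _ Hf) (smooth_Q _ (smooth_partial b1 g Hg))).
  ring.
Qed.

Lemma pd1_comp b g u : smooth1 g -> smooth u -> forall x y,
  pd (b :: nil) (fun x y => g (u x y)) x y = Derive g (u x y) * pd (b :: nil) u x y.
Proof.
  intros Hg Hu x y. simpl. rewrite (partial_comp b g u Hg (smooth_Q _ Hu)). reflexivity.
Qed.

Lemma pd2_comp b1 b2 g u : smooth1 g -> smooth u -> forall x y,
  pd (b2 :: b1 :: nil) (fun x y => g (u x y)) x y =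
  Derive (Derive g) (u x y) * pd (b2 :: nil) u x y * pd (b1 :: nil) u x y +
  Derive g (u x y) * pd (b2 :: b1 :: nil) u x y.
Proof.
  intros Hg Hu x y. simpl. rewrite (partial_comp b1 g u Hg (smooth_Q _ Hu)).
  rewrite (partial_mult b2 (fun x y => Derive g (u x y)) (partial b1 u)).
  2: apply Q_comp; [apply smooth1_D; auto | apply smooth_Q; auto].
  2: apply (smooth_Q _ (smooth_partial b1 u Hu)).
  rewrite (partial_comp b2 (Derive g) u (smooth1_D _ Hg) (smooth_Q _ Hu)). reflexivity.
Qed.

Definition NN (x y : R) := x * x + y * y.

Lemma smooth_NN : smooth NN.
Proof.
  unfold NN. apply (smooth_plus (fun x _ => x * x) (fun _ y => y * y)).
  apply (smooth_mult (fun x _ => x) (fun x _ => x)); apply smooth_X.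
  apply (smooth_mult (fun _ y => y) (fun _ y => y)); apply smooth_Y.
Qed.

Definition crd (b : bool) (x y : R) := if b then x else y.

Lemma partial_NN b : partial b NN = (fun x y => 2 * crd b x y).
Proof.
  destruct b; simpl; apply functional_extensionality; intro x;
  apply functional_extensionality; intro y; unfold NN, crd; apply is_derive_unique; auto_derive; auto; ring.
Qed.

Lemma pd1_NN b x y : pd (b :: nil) NN x y = 2 * crd b x y.
Proof. simpl. rewrite partial_NN. reflexivity. Qed.

Lemma pd2_NN b1 b2 x y : pd (b2 :: b1 :: nil) NN x y = if Bool.eqb b1 b2 then 2 else 0.
Proof.
  simpl. rewrite partial_NN. destruct b1, b2; simpl; unfold crd; apply is_derive_unique; auto_derive; auto; ring.
Qed.


Lemma abs_mul_le a b A B : Rabs a <= A -> Rabs b <= B -> Rabs (a * b) <= A * B.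
Proof.
  intros Ha Hb. rewrite Rabs_mult. apply Rmult_le_compat; auto; apply Rabs_pos.
Qed.

Lemma comb2 F2 F1a F1b F0 G0 G1a G1b G2 P2 P1 Q0 Q1 Q2 :
  Rabs F2 <= P2 -> Rabs F1a <= P1 -> Rabs F1b <= P1 -> Rabs F0 <= 1 ->
  Rabs G0 <= Q0 -> Rabs G1a <= Q1 -> Rabs G1b <= Q1 -> Rabs G2 <= Q2 ->
  Rabs (F2 * G0 + F1a * G1b + F1b * G1a + F0 * G2) <= P2 * Q0 + 2 * (P1 * Q1) + Q2.
Proof.
  intros K1 K2 K3 K4 K5 K6 K7 K8.
  pose proof (abs_mul_le F2 G0 _ _ K1 K5). pose proof (abs_mul_le F1a G1b _ _ K2 K7).
  pose proof (abs_mul_le F1b G1a _ _ K3 K6). pose proof (abs_mul_le F0 G2 _ _ K4 K8).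
  eapply Rle_trans. apply Rabs_triang. eapply Rle_trans. apply Rplus_le_compat_r. apply Rabs_triang.
  eapply Rle_trans. apply Rplus_le_compat_r. apply Rplus_le_compat_r. apply Rabs_triang. lra.
Qed.

Lemma comb1 F1 F0 G0 G1 P1 Q0 Q1 :
  Rabs F1 <= P1 -> Rabs F0 <= 1 -> Rabs G0 <= Q0 -> Rabs G1 <= Q1 ->
  Rabs (F1 * G0 + F0 * G1) <= P1 * Q0 + Q1.
Proof.
  intros K1 K2 K3 K4. pose proof (abs_mul_le F1 G0 _ _ K1 K3). pose proof (abs_mul_le F0 G1 _ _ K2 K4).
  eapply Rle_trans. apply Rabs_triang. lra.
Qed.

Lemma abs_le_of_sq x r : 0 < r -> x * x <= r * r -> Rabs x <= r.
Proof.
  intros Hr H. destruct (Rle_dec (Rabs x) r); auto. exfalso.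
  assert (Rabs x * Rabs x > r * r) by (apply Rmult_gt_0_lt_compat; lra).
  rewrite <- Rabs_mult, Rabs_pos_eq in H0 by nra. lra.
Qed.

Section Main.
Variables (q : R -> R -> R) (tau rho A1 A2 : R).
Hypothesis Hqs : smooth q.
Hypothesis Htau : 0 < tau <= 1.
Hypothesis Hrho : 0 < rho <= 1.
Hypothesis HA1 : 0 <= A1.
Hypothesis HA2 : 0 <= A2.
Hypothesis HA : forall s, 0 <= s -> Rabs (Derive chi s) <= A1 /\ Rabs (Derive (Derive chi) s) <= A2.
Hypothesis Hqb : forall x y, Rabs x <= 2 * rho -> Rabs y <= 2 * rho ->
  (forall b1 b2, Rabs (pd (b2 :: b1 :: nil) q x y) <= tau) /\
  (forall b, Rabs (pd (b :: nil) q x y) <= tau * (Rabs x + Rabs y)) /\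
  Rabs (q x y) <= tau * norm2 x y.

Definition cc := / (rho * rho).
Definition sf (x y : R) := cc * NN x y.
Definition Phi (x y : R) := chi (sf x y).
Definition gg (x y : R) := ((1 - tau) * q x y + (- tau) * NN x y) + (- (tau * (rho * rho))).
Definition Psi (x y : R) := Phi x y * gg x y.

Lemma cc_pos : 0 < cc.
Proof. unfold cc. apply Rinv_0_lt_compat. nra. Qed.

Lemma smooth_sf : smooth sf.
Proof. unfold sf. apply (smooth_mult (fun _ _ => cc) NN). apply smooth_const. apply smooth_NN. Qed.

Lemma smooth_Phi : smooth Phi.
Proof. unfold Phi. apply (smooth_comp chi sf smooth1_chi smooth_sf). Qed.

Lemma smooth_lin2 : smooth (fun x y => (1 - tau) * q x y + (- tau) * NN x y).
Proof.
  apply (smooth_plus (fun x y => (1 - tau) * q x y) (fun x y => (- tau) * NN x y)).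
  apply (smooth_mult (fun _ _ => 1 - tau) q). apply smooth_const. auto.
  apply (smooth_mult (fun _ _ => - tau) NN). apply smooth_const. apply smooth_NN.
Qed.

Lemma smooth_gg : smooth gg.
Proof.
  unfold gg. apply (smooth_plus (fun x y => (1 - tau) * q x y + (- tau) * NN x y) (fun _ _ => - (tau * (rho * rho)))).
  apply smooth_lin2. apply smooth_const.
Qed.

Lemma smooth_Psi : smooth Psi.
Proof. unfold Psi. apply (smooth_mult Phi gg smooth_Phi smooth_gg). Qed.

Lemma pd_gg b l x y : pd (b :: l) gg x y = (1 - tau) * pd (b :: l) q x y + (- tau) * pd (b :: l) NN x y.
Proof.
  unfold gg.
  rewrite (pd_plus (b :: l) (fun x y => (1 - tau) * q x y + (- tau) * NN x y) (fun _ _ => - (tau * (rho * rho)))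
    smooth_lin2 (smooth_const _)).
  rewrite pd_const_cons, Rplus_0_r.
  rewrite (pd_plus (b :: l) (fun x y => (1 - tau) * q x y) (fun x y => (- tau) * NN x y)).
  2: apply (smooth_mult (fun _ _ => 1 - tau) q); [apply smooth_const | auto].
  2: apply (smooth_mult (fun _ _ => - tau) NN); [apply smooth_const | apply smooth_NN].
  rewrite (pd_scal (b :: l) (1 - tau) q), (pd_scal (b :: l) (- tau) NN). reflexivity.
Qed.

Lemma pd1_sf b x y : pd (b :: nil) sf x y = cc * (2 * crd b x y).
Proof. unfold sf. rewrite (pd_scal (b :: nil) cc NN). rewrite pd1_NN. reflexivity. Qed.

Lemma pd2_sf b1 b2 x y : pd (b2 :: b1 :: nil) sf x y = cc * (if Bool.eqb b1 b2 then 2 else 0).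
Proof. unfold sf. rewrite (pd_scal (b2 :: b1 :: nil) cc NN). rewrite pd2_NN. reflexivity. Qed.

Lemma pd1_Phi b x y : pd (b :: nil) Phi x y = Derive chi (sf x y) * (cc * (2 * crd b x y)).
Proof. unfold Phi. rewrite (pd1_comp b chi sf smooth1_chi smooth_sf). rewrite pd1_sf. reflexivity. Qed.

Lemma pd2_Phi b1 b2 x y : pd (b2 :: b1 :: nil) Phi x y =
  Derive (Derive chi) (sf x y) * (cc * (2 * crd b2 x y)) * (cc * (2 * crd b1 x y)) +
  Derive chi (sf x y) * (cc * (if Bool.eqb b1 b2 then 2 else 0)).
Proof.
  unfold Phi. rewrite (pd2_comp b1 b2 chi sf smooth1_chi smooth_sf). rewrite !pd1_sf, pd2_sf. reflexivity.
Qed.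

Lemma inside_coords x y : sf x y <= 2 -> Rabs x <= 2 * rho /\ Rabs y <= 2 * rho /\ NN x y <= 2 * (rho * rho).
Proof.
  intros H. unfold sf, cc, NN in H.
  assert (Hr : 0 < rho * rho) by nra.
  assert (HN : x * x + y * y <= 2 * (rho * rho)).
  { apply Rmult_le_reg_l with (/ (rho * rho)). apply Rinv_0_lt_compat; lra.
    replace (/ (rho * rho) * (2 * (rho * rho))) with 2 by (field; lra). exact H. }
  split; [|split].
  - apply abs_le_of_sq; nra.
  - apply abs_le_of_sq; nra.
  - exact HN.
Qed.

Lemma sf_nonneg x y : 0 <= sf x y.
Proof. unfold sf, NN. pose proof cc_pos. apply Rmult_le_pos; nra. Qed.

Lemma gg_bounds x y : sf x y <= 2 ->
  Rabs (gg x y) <= 5 * tau * (rho * rho) /\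
  (forall b, Rabs (pd (b :: nil) gg x y) <= 8 * tau * rho) /\
  (forall b1 b2, Rabs (pd (b2 :: b1 :: nil) gg x y) <= 3 * tau).
Proof.
  intros Hs. destruct (inside_coords x y Hs) as [Hx [Hy HN]].
  destruct (Hqb x y Hx Hy) as [Q2 [Q1 Q0]].
  assert (Ha : 0 <= 1 - tau <= 1) by lra.
  split; [|split].
  - unfold gg. unfold norm2 in Q0. replace (x ^ 2 + y ^ 2) with (NN x y) in Q0 by (unfold NN; ring).
    assert (0 <= NN x y) by (unfold NN; nra).
    assert (Rabs ((1 - tau) * q x y) <= 1 * (tau * NN x y)) by (apply abs_mul_le; [rewrite Rabs_pos_eq; lra | auto]).
    assert (Rabs (- tau * NN x y) <= tau * (2 * (rho * rho))).
    { rewrite Rabs_mult, Rabs_Ropp, Rabs_pos_eq, Rabs_pos_eq by lra. apply Rmult_le_compat_l; lra. }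
    assert (Rabs (- (tau * (rho * rho))) <= tau * (rho * rho)).
    { rewrite Rabs_Ropp, Rabs_pos_eq. lra. apply Rmult_le_pos; nra. }
    eapply Rle_trans. apply Rabs_triang. eapply Rle_trans. apply Rplus_le_compat_r. apply Rabs_triang. nra.
  - intros b. rewrite pd_gg, pd1_NN.
    assert (Rabs ((1 - tau) * pd (b :: nil) q x y) <= 1 * (tau * (Rabs x + Rabs y))) by (apply abs_mul_le; [rewrite Rabs_pos_eq; lra | auto]).
    assert (Rabs (- tau * (2 * crd b x y)) <= tau * (2 * (2 * rho))).
    { rewrite Rabs_mult, Rabs_Ropp, (Rabs_pos_eq tau) by lra. apply Rmult_le_compat_l. lra.
      rewrite Rabs_mult, (Rabs_pos_eq 2) by lra. apply Rmult_le_compat_l. lra. destruct b; simpl; auto. }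
    eapply Rle_trans. apply Rabs_triang. nra.
  - intros b1 b2. rewrite pd_gg, pd2_NN.
    assert (Rabs ((1 - tau) * pd (b2 :: b1 :: nil) q x y) <= 1 * tau) by (apply abs_mul_le; [rewrite Rabs_pos_eq; lra | auto]).
    assert (Rabs (- tau * (if Bool.eqb b1 b2 then 2 else 0)) <= tau * 2).
    { rewrite Rabs_mult, Rabs_Ropp, (Rabs_pos_eq tau) by lra. apply Rmult_le_compat_l. lra.
      destruct (Bool.eqb b1 b2); [rewrite Rabs_pos_eq|rewrite Rabs_R0]; lra. }
    eapply Rle_trans. apply Rabs_triang. nra.
Qed.

Lemma Phi_bounds x y : sf x y <= 2 ->
  Rabs (Phi x y) <= 1 /\
  (forall b, Rabs (pd (b :: nil) Phi x y) <= 4 * A1 / rho) /\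
  (forall b1 b2, Rabs (pd (b2 :: b1 :: nil) Phi x y) <= (16 * A2 + 2 * A1) / (rho * rho)).
Proof.
  intros Hs. destruct (inside_coords x y Hs) as [Hx [Hy HN]].
  destruct (HA (sf x y) (sf_nonneg x y)) as [H1 H2]. pose proof cc_pos.
  assert (Hcr : forall b, Rabs (cc * (2 * crd b x y)) <= 4 / rho).
  { intro b. rewrite Rabs_mult, Rabs_pos_eq by lra. rewrite Rabs_mult, (Rabs_pos_eq 2) by lra.
    assert (Rabs (crd b x y) <= 2 * rho) by (destruct b; simpl; auto).
    apply Rle_trans with (cc * (2 * (2 * rho))). apply Rmult_le_compat_l; lra.
    unfold cc. right. field. lra. }
  split; [|split].
  - unfold Phi. pose proof (chi_range (sf x y)). rewrite Rabs_pos_eq; lra.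
  - intro b. rewrite pd1_Phi. apply Rle_trans with (A1 * (4 / rho)). apply abs_mul_le; auto.
    right. field. lra.
  - intros b1 b2. rewrite pd2_Phi.
    assert (Rabs (Derive (Derive chi) (sf x y) * (cc * (2 * crd b2 x y)) * (cc * (2 * crd b1 x y))) <= A2 * (4 / rho) * (4 / rho)).
    { apply abs_mul_le; auto. apply abs_mul_le; auto. }
    assert (Rabs (Derive chi (sf x y) * (cc * (if Bool.eqb b1 b2 then 2 else 0))) <= A1 * (cc * 2)).
    { apply abs_mul_le; auto. rewrite Rabs_mult, (Rabs_pos_eq cc) by lra. apply Rmult_le_compat_l. lra.
      destruct (Bool.eqb b1 b2); [rewrite Rabs_pos_eq|rewrite Rabs_R0]; lra. }
    eapply Rle_trans. apply Rabs_triang.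
    replace ((16 * A2 + 2 * A1) / (rho * rho)) with (A2 * (4 / rho) * (4 / rho) + A1 * (cc * 2)).
    lra. unfold cc; field; lra.
Qed.

Definition CC := 80 * A2 + 80 * A1 + 10.

Lemma Phi_zero x y : 2 < sf x y ->
  Phi x y = 0 /\ (forall b, pd (b :: nil) Phi x y = 0) /\ (forall b1 b2, pd (b2 :: b1 :: nil) Phi x y = 0).
Proof.
  intros Hs. split; [|split].
  - unfold Phi. apply chi_zero. lra.
  - intros b. rewrite pd1_Phi, Dchi_zero by lra. ring.
  - intros b1 b2. rewrite pd2_Phi, Dchi_zero, DDchi_zero by lra. ring.
Qed.

Lemma Psi_zero l x y : (length l <= 2)%nat -> 2 < sf x y -> pd l Psi x y = 0.
Proof.
  intros Hl Hs. destruct (Phi_zero x y Hs) as [Z0 [Z1 Z2]].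
  destruct l as [|b1 [|b2 [|b3 l]]].
  - simpl. unfold Psi. rewrite Z0. ring.
  - unfold Psi. rewrite (pd1_mult b1 Phi gg smooth_Phi smooth_gg). rewrite Z0, Z1. ring.
  - unfold Psi. rewrite (pd2_mult b2 b1 Phi gg smooth_Phi smooth_gg). rewrite Z0, !Z1, Z2. ring.
  - simpl in Hl; lia.
Qed.

Lemma Psi_bound l x y : (length l <= 2)%nat -> Rabs (pd l Psi x y) <= CC * tau.
Proof.
  intros Hl. unfold CC.
  destruct (Rle_dec (sf x y) 2) as [Hs | Hs].
  2:{ rewrite Psi_zero by (auto; lra). rewrite Rabs_R0. apply Rmult_le_pos; lra. }
  destruct (Phi_bounds x y Hs) as [F0 [F1 F2]]. destruct (gg_bounds x y Hs) as [G0 [G1 G2]].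
  assert (Hr : 0 < rho * rho) by nra.
  destruct l as [|b1 [|b2 [|b3 l]]].
  - simpl. unfold Psi. apply Rle_trans with (1 * (5 * tau * (rho * rho))). apply abs_mul_le; auto.
    assert (rho * rho <= 1) by nra. nra.
  - unfold Psi. rewrite (pd1_mult b1 Phi gg smooth_Phi smooth_gg).
    eapply Rle_trans. apply comb1; eauto.
    replace (4 * A1 / rho * (5 * tau * (rho * rho)) + 8 * tau * rho) with (tau * rho * (20 * A1 + 8)) by (field; lra).
    assert (tau * rho * (20 * A1 + 8) <= tau * (20 * A1 + 8)).
    { rewrite Rmult_assoc. pattern tau at 2. rewrite <- (Rmult_1_r tau).
      rewrite Rmult_assoc. apply Rmult_le_compat_l. lra. rewrite Rmult_1_l. 
      pattern (20 * A1 + 8) at 2. rewrite <- Rmult_1_l. apply Rmult_le_compat_r; lra. }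
    nra.
  - unfold Psi. rewrite (pd2_mult b2 b1 Phi gg smooth_Phi smooth_gg).
    eapply Rle_trans. apply comb2; eauto.
    replace ((16 * A2 + 2 * A1) / (rho * rho) * (5 * tau * (rho * rho)) + 2 * (4 * A1 / rho * (8 * tau * rho)) + 3 * tau)
      with (tau * (80 * A2 + 74 * A1 + 3)) by (field; lra).
    nra.
  - simpl in Hl; lia.
Qed.

Lemma Psi_one x y : NN x y < rho * rho -> Psi x y = gg x y.
Proof.
  intros H. unfold Psi, Phi. rewrite chi_one. ring. unfold sf, cc.
  apply Rmult_le_reg_l with (rho * rho). nra. rewrite <- Rmult_assoc, Rinv_r, Rmult_1_l by nra. lra.
Qed.
End Main.


Lemma loc_lt1 (f : R -> R) x : continuous f x -> f x < 1 -> locally x (fun t => f t < 1).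
Proof.
  intros Hc Hx. assert (H : 0 < 1 - f x) by lra.
  generalize (proj1 (filterlim_locally _ _) Hc (mkposreal _ H)). apply filter_imp.
  intros t Ht. change (Rabs (f t - f x) < 1 - f x) in Ht. apply Rabs_def2 in Ht. lra.
Qed.

Lemma pd_local f h l : (forall x y, NN x y < 1 -> f x y = h x y) ->
  forall x y, NN x y < 1 -> pd l f x y = pd l h x y.
Proof.
  intros Hfh. induction l as [|b l IH]; intros x y Hxy. simpl; auto.
  simpl. destruct b; simpl.
  - apply Derive_ext_loc. generalize (loc_lt1 (fun t => NN t y) x). intros L.
    eapply filter_imp; [| apply L]. intros t Ht; apply IH; exact Ht.
    apply (ex_derive_continuous (K:=R_AbsRing) (V:=R_NormedModule)). unfold NN. auto_derive; auto.
    exact Hxy.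
  - apply Derive_ext_loc. generalize (loc_lt1 (fun t => NN x t) y). intros L.
    eapply filter_imp; [| apply L]. intros t Ht; apply IH; exact Ht.
    apply (ex_derive_continuous (K:=R_AbsRing) (V:=R_NormedModule)). unfold NN. auto_derive; auto.
    exact Hxy.
Qed.

Theorem mainTheorem10 (phi psi : R -> R -> R) :
  strictly_subharmonic phi ->
  (forall e, 0 < e -> exists d, 0 < d /\ forall x y, norm2 x y < d ->
      Rabs (phi x y - norm2 x y) <= e * norm2 x y) ->
  strictly_subharmonic psi ->
  S1_invariant psi ->
  (forall x y, norm2 x y < 1 -> psi x y = norm2 x y) ->
  extends_smooth_at_infinity psi ->
  forall eps, 0 < eps ->
  exists (phie : R -> R -> R) (d1 d2 r : R),
    strictly_subharmonic phie /\ 0 < d1 /\ 0 < d2 /\ 0 < r /\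
    (forall x y, norm2 x y < r ^ 2 -> phie x y = (1 - d1) * phi x y - d2) /\
    (forall x y, 1 < norm2 x y -> phie x y = psi x y) /\
    C2_norm_lt (fun x y => phie x y - psi x y) eps.
Proof.
  intros [Hphis _] Hphi0 [Hpsis Hpsil] _ Hpsi1 _ eps Heps.
  set (q := fun x y => phi x y + (-1) * NN x y).
  assert (Hqs : smooth q).
  { apply (smooth_plus phi (fun x y => (-1) * NN x y)). exact Hphis.
    apply (smooth_mult (fun _ _ => -1) NN). apply smooth_const. apply smooth_NN. }
  assert (HNn : forall x y, NN x y = norm2 x y) by (intros; unfold NN, norm2; ring).
  assert (Hq : forall e, 0 < e -> exists d, 0 < d /\ forall x y, norm2 x y < d ->
      Rabs (q x y) <= e * norm2 x y).
  { intros e He. destruct (Hphi0 e He) as [d [Hd H]]. exists d. split; auto.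
    intros x y Hxy. unfold q. rewrite HNn. replace (phi x y + -1 * norm2 x y) with (phi x y - norm2 x y) by ring.
    auto. }
  destruct chi_bounds as [A1 [A2 [HA1 [HA2 HA]]]].
  assert (HC : 10 <= CC A1 A2) by (unfold CC; lra).
  set (tau := Rmin eps 1 / (2 * CC A1 A2)).
  assert (Hm : 0 < Rmin eps 1 <= 1) by (split; [apply Rmin_pos; lra | apply Rmin_r]).
  assert (Hm2 : Rmin eps 1 <= eps) by apply Rmin_l.
  assert (Htau : 0 < tau <= 1).
  { unfold tau. split. apply Rdiv_lt_0_compat; lra.
    apply Rmult_le_reg_r with (2 * CC A1 A2). lra. unfold Rdiv. rewrite Rmult_assoc, Rinv_l by lra. lra. }
  assert (HCt : CC A1 A2 * tau = Rmin eps 1 / 2) by (unfold tau; field; lra).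
  destruct (q_bounds q Hqs Hq tau (proj1 Htau)) as [dl [Hdl [Hdl1 Hb]]].
  set (rho := dl / 4).
  assert (Hrho : 0 < rho <= 1) by (unfold rho; split; lra).
  assert (Hqb : forall x y, Rabs x <= 2 * rho -> Rabs y <= 2 * rho ->
    (forall b1 b2, Rabs (pd (b2 :: b1 :: nil) q x y) <= tau) /\
    (forall b, Rabs (pd (b :: nil) q x y) <= tau * (Rabs x + Rabs y)) /\
    Rabs (q x y) <= tau * norm2 x y).
  { intros x y Hx Hy. apply Hb; unfold rho in *; lra. }
  pose proof (Psi_bound q tau rho A1 A2 Hqs Htau Hrho HA1 HA2 HA Hqb) as PB.
  assert (Hsf : forall x y, 1 <= NN x y -> 2 < sf rho x y).
  { intros x y H. unfold sf, cc. assert (Hr : rho * rho <= 1 / 16) by (unfold rho; nra).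
    assert (Hr0 : 0 < rho * rho) by nra.
    assert (E : / (rho * rho) * (rho * rho) = 1) by (field; lra).
    assert (0 < / (rho * rho)) by (apply Rinv_0_lt_compat; lra). nra. }
  exists (fun x y => psi x y + Psi q tau rho x y), tau, (tau * (rho * rho)), rho.
  split; [|split; [|split; [|split; [|split; [|split]]]]].
  - split. apply (smooth_plus psi (Psi q tau rho)); auto. apply smooth_Psi; auto.
    intros x y. unfold laplacian.
    rewrite !(pd_plus _ psi (Psi q tau rho) Hpsis (smooth_Psi q tau rho Hqs)).
    destruct (Rlt_dec (NN x y) 1) as [Hin | Hout].
    + rewrite (pd_local psi NN (true :: true :: nil)), (pd_local psi NN (false :: false :: nil)); auto.
      2,3: intros u v Huv; rewrite Hpsi1, HNn; auto; rewrite <- HNn; auto.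
      rewrite !pd2_NN. replace (if Bool.eqb true true then 2 else 0) with 2 by reflexivity.
      replace (if Bool.eqb false false then 2 else 0) with 2 by reflexivity.
      pose proof (PB (true :: true :: nil) x y ltac:(simpl; lia)).
      pose proof (PB (false :: false :: nil) x y ltac:(simpl; lia)).
      rewrite HCt in *. apply Rabs_le_between in H. apply Rabs_le_between in H0. lra.
    + rewrite !(Psi_zero q tau rho Hqs) by (simpl; auto; apply Hsf; lra).
      rewrite !Rplus_0_r. apply Hpsil.
  - apply Htau.
  - apply Rmult_lt_0_compat. apply Htau. nra.
  - apply Hrho.
  - intros x y Hxy. rewrite <- HNn in Hxy. replace (rho ^ 2) with (rho * rho) in Hxy by ring.
    rewrite (Psi_one q tau rho Hrho x y Hxy). rewrite Hpsi1 by (rewrite <- HNn; nra).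
    unfold gg, q. rewrite <- HNn. ring.
  - intros x y Hxy. rewrite <- HNn in Hxy.
    pose proof (Psi_zero q tau rho Hqs nil x y ltac:(simpl; lia) (Hsf x y ltac:(lra))) as Z.
    simpl in Z. rewrite Z. ring.
  - exists (CC A1 A2 * tau). split. lra.
    replace (fun x y => psi x y + Psi q tau rho x y - psi x y) with (Psi q tau rho).
    intros l x y Hl. apply PB; auto.
    apply functional_extensionality; intro x; apply functional_extensionality; intro y. ring.
Qed.
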